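(* Let $\iota:\mathcal{F}\to\mathcal{F}_{quad}$ be the precomposition functor $\iota(F)=F\circ\epsilon$, where $\epsilon:\mathcal{T}_q\to\mathcal{E}^f$ is the forgetful functor described in the context. Then: (1) $\iota$ is exact; (2) $\iota$ preserves tensor products (pointwise tensor products over $\mathbb{F}_2$); (3) $\iota$ is fully faithful; (4) if $S$ is a simple object of $\mathcal{F}$, then $\iota(S)$ is a simple object of $\mathcal{F}_{quad}$.
   Context: All vector spaces are over $\mathbb{F}_2$. $\mathcal{E}$ is the category of all $\mathbb{F}_2$-vector spaces, $\mathcal{E}^f$ its full subcategory of finite-dimensional spaces, and $\mathcal{F}=\mathrm{Func}(\mathcal{E}^f,\mathcal{E})$. A quadratic form on a finite-dimensional $V$ is a map $q:V\to\mathbb{F}_2$ such that $B(x,y)=q(x+y)+q(x)+q(y)$ is bilinear; $(V,q)$ is non-degenerate if $\{v: B(v,w)=0\ \forall w\}=0$. $\mathcal{E}_q$ is the category whose objects are finite-dimensional non-degenerate quadratic spaces and whose morphisms are linear maps preserving the quadratic forms (these are injective). For $f:V\to W$ in $\mathcal{E}_q$, $W=f(V)\perp V'$ with $V'$ the orthogonal complement of $f(V)$. Pseudo push-out: given $f:V\to W=f(V)\perp V'$ and $g:V\to X=g(V)\perp V''$ in $\mathcal{E}_q$, set $W\perp_V X=V\perp V'\perp V''$, with the maps $W\to V\perp V'\perp V''$, $f(v)+v'\mapsto v+v'$, and $X\to V\perp V'\perp V''$, $g(v)+v''\mapsto v+v''$. The category $\mathcal{T}_q$: objects are those of $\mathcal{E}_q$;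 a morphism $V\to W$ is represented by a diagram $V\xrightarrow{f}X\xleftarrow{g}W$ in $\mathcal{E}_q$, written $[V\xrightarrow{f}X\xleftarrow{g}W]$; two such diagrams $[V\to X_1\leftarrow W]$, $[V\to X_2\leftarrow W]$ are identified under the equivalence relation generated by: there exists a morphism $\alpha:X_1\to X_2$ in $\mathcal{E}_q$ making both triangles commute. Composition of $[V\to X_1\leftarrow W]$ followed by $[W\to X_2\leftarrow Y]$ is $[V\to X_1\perp_W X_2\leftarrow Y]$ using the pseudo push-out of $X_1\leftarrow W\to X_2$. Then $\mathcal{F}_{quad}=\mathrm{Func}(\mathcal{T}_q,\mathcal{E})$. The functor $\epsilon:\mathcal{T}_q\to\mathcal{E}^f$ sends $V$ to its underlying vector space and $[V\xrightarrow{f}X\xleftarrow{g}W]$ to $p_g\circ f$, where, writing $X=g(W)\perp W'$, $p_g:X\to W$ is the orthogonal projection onto $g(W)$ followed by $g^{-1}$ (this is well defined and functorial). *)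

(* Defs.v *)
From HB Require Import structures.
From mathcomp Require Import all_boot all_order all_algebra.
Unset Strict Implicit.
Unset Printing Implicit Defensive.
Import GRing.Theory.
Local Open Scope ring_scope.

Notation F2 := 'F_2.

Definition is_lin (U W : lmodType F2) (h : U -> W) : Prop :=
  forall (a : F2) (x y : U), h (a *: x + y) = a *: h x + h y.

Definition is_bilin (U W T : lmodType F2) (b : U -> W -> T) : Prop :=
  (forall w, is_lin U T (fun u => b u w)) /\ (forall u, is_lin W T (b u)).

Definition is_tensor (U W T : lmodType F2) (b : U -> W -> T) : Prop :=
  is_bilin U W T b /\
  forall (Z : lmodType F2) (c : U -> W -> Z), is_bilin U W Z c ->
    exists h : T -> Z,
      [/\ is_lin T Z h, (forall u w, h (b u w) = c u w) &
          forall h' : T -> Z, is_lin T Z h' -> (forall u w, h' (b u w) = c u w) ->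
            forall t, h' t = h t].

(* The category F = Func(E^f, E).  E^f is represented by its skeleton:  *)
(* objects n : nat (standing for F2^n = 'rV_n), morphisms m -> n the    *)
(* matrices 'M_(m,n) acting on row vectors (v |-> v *m A), composition  *)
(* of A then B being A *m B.                                            *)
Record Ffun := {
  Fob : nat -> lmodType F2;
  Fmor : forall m n, 'M[F2]_(m, n) -> Fob m -> Fob n;
  Fmor_lin : forall m n (A : 'M[F2]_(m, n)), is_lin (Fob m) (Fob n) (Fmor m n A);
  Fmor_id : forall n (x : Fob n), Fmor n n (1%:M : 'M[F2]_n) x = x;
  Fmor_comp : forall m n p (A : 'M[F2]_(m, n)) (B : 'M[F2]_(n, p)) x,
      Fmor m p (A *m B) x = Fmor n p B (Fmor m n A x)
}.
Arguments Fmor f {m n} A _.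

Definition Fnat (F G : Ffun) (eta : forall n, Fob F n -> Fob G n) : Prop :=
  (forall n, is_lin _ _ (eta n)) /\
  forall m n (A : 'M[F2]_(m, n)) x, eta n (Fmor F A x) = Fmor G A (eta m x).

Definition Fexact (F G H : Ffun) (eta : forall n, Fob F n -> Fob G n)
    (theta : forall n, Fob G n -> Fob H n) : Prop :=
  forall n (y : Fob G n), theta n y = 0 <-> exists x, eta n x = y.

Definition Ftensor (F G H : Ffun) (b : forall n, Fob F n -> Fob G n -> Fob H n)
  : Prop :=
  (forall n, is_tensor _ _ _ (b n)) /\
  forall m n (A : 'M[F2]_(m, n)) x y,
    Fmor H A (b m x y) = b n (Fmor F A x) (Fmor G A y).

Definition Fsubfunctor (F : Ffun) (S : forall n, Fob F n -> Prop) : Prop :=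
  [/\ forall n, S n 0,
      forall n (a : F2) x y, S n x -> S n y -> S n (a *: x + y) &
      forall m n (A : 'M[F2]_(m, n)) x, S m x -> S n (Fmor F A x)].

Definition Fsimple (F : Ffun) : Prop :=
  (exists n (x : Fob F n), x <> 0) /\
  forall S, Fsubfunctor F S ->
    (forall n x, S n x -> x = 0) \/ (forall n x, S n x).

(* Quadratic spaces.  A finite-dimensional space is F2^n = 'rV_n.       *)
Definition bform n (q : 'rV[F2]_n -> F2) (x y : 'rV[F2]_n) : F2 :=
  q (x + y) + q x + q y.

Definition is_quadratic n (q : 'rV[F2]_n -> F2) : Prop :=
  (forall (a : F2) x y z, bform n q (a *: x + y) z = a * bform n q x z + bform n q y z) /\
  (forall (a : F2) x y z, bform n q z (a *: x + y) = a * bform n q z x + bform n q z y).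

Definition nondegenerate n (q : 'rV[F2]_n -> F2) : Prop :=
  forall v, (forall w, bform n q v w = 0) -> v = 0.

(* objects of E_q (and of T_q) *)
Record qspace := {
  qdim : nat;
  qf : 'rV[F2]_qdim -> F2;
  qf_quad : is_quadratic qdim qf;
  qf_nondeg : nondegenerate qdim qf
}.

Record qmor (V W : qspace) := {
  qmat : 'M[F2]_(qdim V, qdim W);
  qmat_pres : forall v, qf W (v *m qmat) = qf V v
}.
Arguments qmat {V W} _.

(* p_g : X -> W for g : W -> X in E_q: orthogonal projection onto g(W)
   followed by g^{-1}; p_g x is the unique w with
   B_W(w, w') = B_X(x, g w') for all w'. *)
Definition proj_g (W X : qspace) (g : qmor W X) (x : 'rV[F2]_(qdim X))
  : 'rV[F2]_(qdim W) :=
  odflt 0 [pick w : 'rV[F2]_(qdim W) |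
             [forall w' : 'rV[F2]_(qdim W),
                bform _ (qf W) w w' == bform _ (qf X) x (w' *m qmat g)]].

(* epsilon([V -f-> X <-g- W]) = p_g o f, as a matrix *)
Definition eps (V W X : qspace) (f : qmor V X) (g : qmor W X)
  : 'M[F2]_(qdim V, qdim W) :=
  lin1_mx (fun v => proj_g W X g (v *m qmat f)).

(* Functors T_q -> E, given by their action on objects and on the
   representing diagrams [V -f-> X <-g- W] of morphisms of T_q.  The
   notions below (natural transformations, exactness, tensor products,
   subfunctors, simplicity) only use this data. *)
Record Qdata := {
  Qob : qspace -> lmodType F2;
  Qmor : forall V W X, qmor V X -> qmor W X -> Qob V -> Qob W
}.
Arguments Qmor q {V W X} _ _ _.

Definition Qnat (P Q : Qdata) (th : forall V, Qob P V -> Qob Q V) : Prop :=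
  (forall V, is_lin _ _ (th V)) /\
  forall V W X (f : qmor V X) (g : qmor W X) x,
    th W (Qmor P f g x) = Qmor Q f g (th V x).

Definition Qexact (P Q R : Qdata) (eta : forall V, Qob P V -> Qob Q V)
    (theta : forall V, Qob Q V -> Qob R V) : Prop :=
  forall V (y : Qob Q V), theta V y = 0 <-> exists x, eta V x = y.

Definition Qtensor (P Q R : Qdata) (b : forall V, Qob P V -> Qob Q V -> Qob R V)
  : Prop :=
  (forall V, is_tensor _ _ _ (b V)) /\
  forall V W X (f : qmor V X) (g : qmor W X) x y,
    Qmor R f g (b V x y) = b W (Qmor P f g x) (Qmor Q f g y).

Definition Qsubfunctor (P : Qdata) (S : forall V, Qob P V -> Prop) : Prop :=
  [/\ forall V, S V 0,
      forall V (a : F2) x y, S V x -> S V y -> S V (a *: x + y) &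
      forall V W X (f : qmor V X) (g : qmor W X) x, S V x -> S W (Qmor P f g x)].

Definition Qsimple (P : Qdata) : Prop :=
  (exists V (x : Qob P V), x <> 0) /\
  forall S, Qsubfunctor P S ->
    (forall V x, S V x -> x = 0) \/ (forall V x, S V x).

Definition iotaQ (F : Ffun) : Qdata :=
  {| Qob := fun V => Fob F (qdim V);
     Qmor := fun V W X f g => Fmor F (eps V W X f g) : Fob F (qdim V) -> Fob F (qdim W) |}.

Definition iota_nat (F G : Ffun) (eta : forall n, Fob F n -> Fob G n)
  : forall V, Qob (iotaQ F) V -> Qob (iotaQ G) V :=
  fun V => eta (qdim V).
Arguments iota_nat {F G} eta V _.

(* Main.v *)
Require Import Defs.
From mathcomp Require Import all_boot all_order all_algebra.
From mathcomp Require Import ring.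
Import GRing.Theory.
Local Open Scope ring_scope.

Lemma F2c2 (x : F2) : x + x = 0.
Proof. apply: addrr_pchar2. exact: (@pchar_Fp 2). Qed.

Lemma F2c2v m n (x : 'M[F2]_(m, n)) : x + x = 0.
Proof. by apply/matrixP => i j; rewrite !mxE F2c2. Qed.

Lemma mxDE m n (A B : 'M[F2]_(m,n)) i j : (A + B) i j = A i j + B i j.
Proof. by rewrite mxE. Qed.
Lemma mxZE m n (a : F2) (A : 'M[F2]_(m,n)) i j : (a *: A) i j = a * A i j.
Proof. by rewrite mxE. Qed.

Section Quad.
Variables (n : nat) (q : 'rV[F2]_n -> F2) (Hq : is_quadratic n q).

Lemma B0l z : bform n q 0 z = 0.
Proof.
have := Hq.1 1 0 0 z; rewrite scale1r addr0 mul1r => h.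
by apply/eqP; rewrite -(addrI _ (esym (etrans (addr0 _) h))).
Qed.
Lemma B0r z : bform n q z 0 = 0.
Proof.
have := Hq.2 1 0 0 z; rewrite scale1r addr0 mul1r => h.
by apply/eqP; rewrite -(addrI _ (esym (etrans (addr0 _) h))).
Qed.
Lemma q0 : q 0 = 0.
Proof.
have := B0l 0; rewrite /bform addr0 -addrA F2c2 addr0 //.
Qed.
Lemma BAl x y z : bform n q (x + y) z = bform n q x z + bform n q y z.
Proof. by have := Hq.1 1 x y z; rewrite scale1r mul1r. Qed.
End Quad.
Arguments B0l {n q} Hq z.
Arguments B0r {n q} Hq z.
Arguments q0 {n q} Hq.
Arguments BAl {n q} Hq x y z.

Lemma Fmor_linE (F : Ffun) m n (A : 'M[F2]_(m, n)) a x y :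
  Fmor F A (a *: x + y) = a *: Fmor F A x + Fmor F A y.
Proof. exact: Fmor_lin. Qed.

Lemma lin0 {U W : lmodType F2} (h : U -> W) : is_lin U W h -> h 0 = 0.
Proof.
move=> hl; have := hl 1 0 0; rewrite scale1r !addr0 scale1r => e.
by apply/eqP; rewrite -(addrI _ (esym (etrans (addr0 _) e))).
Qed.

Definition osq (V W : qspace) (x : 'rV[F2]_(qdim V + qdim W)) : F2 :=
  qf V (lsubmx x) + qf W (rsubmx x).

Lemma bform_osq V W x y : bform _ (osq V W) x y =
  bform _ (qf V) (lsubmx x) (lsubmx y) + bform _ (qf W) (rsubmx x) (rsubmx y).
Proof. rewrite /bform /osq !linearD /=. ring. Qed.

Lemma osq_quad V W : is_quadratic _ (osq V W).
Proof.
split=> a x y z; rewrite !bform_osq !linearP /=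
  ?((qf_quad V).1) ?((qf_quad W).1) ?((qf_quad V).2) ?((qf_quad W).2); ring.
Qed.

Lemma osq_nondeg V W : Defs.nondegenerate _ (osq V W).
Proof.
move=> v hv.
have hl : lsubmx v = 0.
  apply: (qf_nondeg V) => w1; have := hv (row_mx w1 0).
  by rewrite bform_osq row_mxKl row_mxKr (B0r (qf_quad W)) addr0.
have hr : rsubmx v = 0.
  apply: (qf_nondeg W) => w1; have := hv (row_mx 0 w1).
  by rewrite bform_osq row_mxKl row_mxKr (B0r (qf_quad V)) add0r.
by rewrite -[v]hsubmxK hl hr row_mx0.
Qed.

Definition osum (V W : qspace) : qspace :=
  {| qdim := qdim V + qdim W; qf := osq V W;
     qf_quad := osq_quad V W; qf_nondeg := osq_nondeg V W |}.

Definition sp n (u v : 'rV[F2]_n) : F2 := (u *m v^T) 0 0.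
Arguments sp {n}.

Lemma spDl n a (u u' v : 'rV[F2]_n) : sp (a *: u + u') v = a * sp u v + sp u' v.
Proof. by rewrite /sp mulmxDl -scalemxAl mxDE mxZE. Qed.
Lemma spDr n a (u v v' : 'rV[F2]_n) : sp u (a *: v + v') = a * sp u v + sp u v'.
Proof. by rewrite /sp linearP /= mulmxDr -scalemxAr mxDE mxZE. Qed.
Lemma spAl n (u u' v : 'rV[F2]_n) : sp (u + u') v = sp u v + sp u' v.
Proof. by rewrite /sp mulmxDl mxDE. Qed.
Lemma spAr n (u v v' : 'rV[F2]_n) : sp u (v + v') = sp u v + sp u v'.
Proof. by rewrite /sp linearD /= mulmxDr mxDE. Qed.

Definition hq n (x : 'rV[F2]_(n + n)) : F2 := sp (lsubmx x) (rsubmx x).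

Lemma bform_hq n x y : bform _ (hq n) x y =
  sp (lsubmx x) (rsubmx y) + sp (lsubmx y) (rsubmx x).
Proof.
rewrite /bform /hq !linearD /= !spAl !spAr.
set a := sp _ _; set b := sp _ _; set c := sp _ _; set d := sp _ _.
transitivity (b + c + (a + a) + (d + d)); first ring.
by rewrite !F2c2 !addr0.
Qed.

Lemma hq_quad n : is_quadratic _ (hq n).
Proof.
split=> a x y z; rewrite !bform_hq !linearP /= ?spDl ?spDr; ring.
Qed.

Lemma hq_nondeg n : Defs.nondegenerate _ (hq n).
Proof.
move=> v hv.
have hl : lsubmx v = 0.
  apply/rowP => i; have := hv (row_mx 0 (delta_mx 0 i)).
  rewrite bform_hq row_mxKl row_mxKr /sp trmx_delta -colE mul0mx.
  by rewrite !mxE addr0 => ->.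
have hr : rsubmx v = 0.
  apply/rowP => i; have := hv (row_mx (delta_mx 0 i) 0).
  rewrite bform_hq row_mxKl row_mxKr /sp linear0 mulmx0 -rowE.
  by rewrite !mxE add0r => ->.
by rewrite -[v]hsubmxK hl hr row_mx0.
Qed.

Definition Hs (n : nat) : qspace :=
  {| qdim := n + n; qf := hq n; qf_quad := hq_quad n; qf_nondeg := hq_nondeg n |}.

Lemma bform_osum V W x y : bform (qdim (osum V W)) (qf (osum V W)) x y =
  bform _ (qf V) (lsubmx x) (lsubmx y) + bform _ (qf W) (rsubmx x) (rsubmx y).
Proof. exact: bform_osq. Qed.

Definition fmat (V W : qspace) (A : 'M[F2]_(qdim V, qdim W))
  : 'M[F2]_(qdim V, qdim V + (qdim W + qdim W)) := row_mx 1%:M (row_mx A A).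
Definition gmat (V W : qspace)
  : 'M[F2]_(qdim W, qdim V + (qdim W + qdim W)) := row_mx 0 (row_mx 1%:M 0).

Lemma fmat_pres V W A v :
  qf (osum V (osum W W)) (v *m fmat V W A) = qf V v.
Proof.
rewrite /= /osq /fmat !mul_mx_row row_mxKl row_mxKr mulmx1 /=.
by rewrite /osq row_mxKl row_mxKr F2c2 addr0.
Qed.

Lemma gmat_pres V W w :
  qf (osum V (osum W W)) (w *m gmat V W) = qf W w.
Proof.
rewrite /= /osq /gmat !mul_mx_row row_mxKl row_mxKr mulmx1 /=.
by rewrite /osq row_mxKl row_mxKr !mulmx0 !(q0 (qf_quad _)) add0r addr0.
Qed.

Definition fq V W A : qmor V (osum V (osum W W)) :=
  @Build_qmor V (osum V (osum W W)) (fmat V W A) (fmat_pres V W A).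
Definition gq V W : qmor W (osum V (osum W W)) :=
  @Build_qmor W (osum V (osum W W)) (gmat V W) (gmat_pres V W).

Lemma proj_fg V W A v :
  proj_g W _ (gq V W) (v *m qmat (fq V W A)) = v *m A.
Proof.
set u := v *m A.
have key : forall w', bform _ (qf W) u w' =
    bform _ (qf (osum V (osum W W))) (v *m qmat (fq V W A)) (w' *m qmat (gq V W)).
  move=> w'; rewrite bform_osum /= /fmat /gmat !mul_mx_row !row_mxKl !row_mxKr.
  rewrite mulmx1 mulmx0 (B0r (qf_quad V)) add0r bform_osum !row_mxKl !row_mxKr.
  by rewrite mulmx1 mulmx0 (B0r (qf_quad W)) addr0.
rewrite /proj_g; case: pickP => [w /forallP Hw | Hn]; last first.
  have : [forall w', bform _ (qf W) u w' == bform _ (qf (osum V (osum W W)))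
      (v *m qmat (fq V W A)) (w' *m qmat (gq V W))].
    by apply/forallP => w'; apply/eqP; exact: key.
  by rewrite Hn.
have h0 : w + u = 0.
  apply: (qf_nondeg W) => w'; rewrite (BAl (qf_quad W)) key.
  by rewrite (eqP (Hw w')) F2c2.
by apply: (addIr u); rewrite h0 F2c2v.
Qed.

Lemma KL (V W : qspace) (A : 'M[F2]_(qdim V, qdim W)) :
  exists X (f : qmor V X) (g : qmor W X), eps V W X f g = A.
Proof.
exists (osum V (osum W W)), (fq V W A), (gq V W).
apply/matrixP => i j; rewrite /eps mxE proj_fg -rowE mxE //.
Qed.

Definition Imx n : 'M[F2]_(n, n + n) := row_mx 1%:M 0.
Definition Pmx n : 'M[F2]_(n + n, n) := col_mx 1%:M 0.
Lemma IP n : Imx n *m Pmx n = 1%:M.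
Proof. by rewrite /Imx /Pmx mul_row_col mulmx1 mul0mx addr0. Qed.

Lemma Fmor_IP (F : Ffun) n x : Fmor F (Pmx n) (Fmor F (Imx n) x) = x.
Proof. by rewrite -Fmor_comp IP Fmor_id. Qed.

Lemma Fmor_shift (F : Ffun) m n (A : 'M[F2]_(m, n)) x :
  Fmor F (Imx n) (Fmor F A x) = Fmor F (Pmx m *m (A *m Imx n)) (Fmor F (Imx m) x).
Proof. by rewrite -!Fmor_comp mulmxA mulmxA IP mul1mx. Qed.

Lemma Fmor0 (F : Ffun) m n (A : 'M[F2]_(m, n)) : Fmor F A 0 = 0.
Proof. exact: (lin0 _ (Fmor_lin F _ _ A)). Qed.

Theorem theorem3p1 :
  (* (1) iotaQ is exact *)
  (forall (F G H : Ffun) (eta : forall n, Fob F n -> Fob G n)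
          (theta : forall n, Fob G n -> Fob H n),
     Fnat F G eta -> Fnat G H theta -> Fexact F G H eta theta ->
     Qexact (iotaQ F) (iotaQ G) (iotaQ H) (iota_nat eta) (iota_nat theta)) /\
  (* (2) iotaQ preserves (pointwise) tensor products *)
  (forall (F G H : Ffun) (b : forall n, Fob F n -> Fob G n -> Fob H n),
     Ftensor F G H b ->
     Qtensor (iotaQ F) (iotaQ G) (iotaQ H) (fun V => b (qdim V))) /\
  (* (3) iotaQ is fully faithful *)
  (forall F G : Ffun,
     (forall eta eta' : forall n, Fob F n -> Fob G n,
        Fnat F G eta -> Fnat F G eta' ->
        (forall V x, iota_nat eta V x = iota_nat eta' V x) ->
        forall n x, eta n x = eta' n x) /\
     (forall th : forall V, Qob (iotaQ F) V -> Qob (iotaQ G) V,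
        Qnat (iotaQ F) (iotaQ G) th ->
        exists eta : forall n, Fob F n -> Fob G n,
          Fnat F G eta /\ forall V x, iota_nat eta V x = th V x)) /\
  (* (4) iotaQ sends simple objects to simple objects *)
  (forall S : Ffun, Fsimple S -> Qsimple (iotaQ S)).
Proof.
split.
  move=> F G H eta theta _ _ Hex V y; exact: Hex.
split.
  move=> F G H b [Hb1 Hb2]; split; first by move=> V; exact: Hb1.
  move=> V W X f g x y; exact: Hb2.
split.
  move=> F G; split.
    move=> eta eta' [_ He] [_ He'] Hag n x.
    rewrite -(Fmor_IP F n x) He He'; congr (Fmor G _ _).
    exact: (Hag (Hs n)).
  move=> th [thl thn].
  have thm : forall V W (A : 'M[F2]_(qdim V, qdim W)) x,
      th W (Fmor F A x) = Fmor G A (th V x).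
    move=> V W A x; have [X [f [g <-]]] := KL V W A; exact: thn.
  exists (fun n x => Fmor G (Pmx n) (th (Hs n) (Fmor F (Imx n) x))).
  split; last first.
    move=> V x; rewrite /iota_nat.
    by rewrite (thm V (Hs (qdim V)) (Imx (qdim V))) Fmor_IP.
  split.
    move=> n a x y; by rewrite Fmor_linE thl Fmor_linE.
  move=> m n A x.
  rewrite Fmor_shift (thm (Hs m) (Hs n)) -!Fmor_comp; congr (Fmor G _ _).
  by rewrite -!mulmxA IP mulmx1.
move=> S [[n [x hx]] Hs0]; split.
  exists (Hs n), (Fmor S (Imx n) x) => h; apply: hx.
  by rewrite -(Fmor_IP S n x) /= h Fmor0.
move=> T [T0 TD TM].
have Tm : forall V W (A : 'M[F2]_(qdim V, qdim W)) x,
    T V x -> T W (Fmor S A x).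
  move=> V W A z hz; have [X [f [g <-]]] := KL V W A; exact: TM.
have sub : Fsubfunctor S (fun n x => T (Hs n) (Fmor S (Imx n) x)).
  split.
  - move=> k; rewrite Fmor0; exact: T0.
  - move=> k a y z hy hz; rewrite Fmor_linE; exact: TD.
  - move=> k l A y hy; rewrite Fmor_shift; exact: (Tm (Hs k) (Hs l)).
case: (Hs0 _ sub) => [Hz | Ha]; [left | right].
  move=> V y hy; apply: (Hz (qdim V)); exact: Tm.
move=> V y; rewrite -(Fmor_IP S (qdim V) y).
exact: (Tm (Hs (qdim V)) V).
Qed.
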